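(* Let $(G,X,\Gamma)$ be a $(\mu,\nu)$-path system group containing a $\delta$-constricting element $(g,A)$ with $\delta$-constricting map $\pi_A\colon X\to A$. There exists $\theta\ge0$ such that for all $x,x'\in X$ and all $m\in\mathbb Z$, $$d_A(x,g^mx')\ge |m|\,[g]^\infty-d_A(x,x')-\theta.$$
   Context: A path is a rectifiable continuous map $\alpha\colon[a,b]\to X$ parametrised by arc length; it is a $(\kappa,\lambda)$-quasi-geodesic if $d(\alpha(t),\alpha(t'))\le|t-t'|\le\kappa d(\alpha(t),\alpha(t'))+\lambda$. A $(\mu,\nu)$-path system group $(G,X,\Gamma)$ is a group $G$ acting properly by isometries on a geodesic metric space $X$ together with a $G$-invariant collection $\Gamma$ of paths closed under subpaths, such that any two points are joined by an element of $\Gamma$ and every element is a $(\mu,\nu)$-quasi-geodesic. A map $\pi_A\colon X\to A$ is $\delta$-constricting if (CS1) $d(x,\pi_A(x))\le\delta$ for $x\in A$, and (CS2) for all $x,y\in X$ and $\gamma\in\Gamma$ joining them, if $d(\pi_A(x),\pi_A(y))>\delta$ then $\gamma$ meets $B_X(\pi_A(x),\delta)$ and $B_X(\pi_A(y),\delta)$. An element $g$ is $\delta$-constricting, written $(g,A)$, if it has infinite order and $A$ is a $\langle g\rangle$-invariant subset with a $\delta$-constricting map $\pi_A$, on which $\langle g\rangle$ acts $\delta$-coboundedly. $d_A(x,y)=d(\pi_A(x),\pi_A(y))$. The asymptotic translation length is $[g]^\infty=\limsup_{m\to\infty}\frac1m d(o,g^mo)$ for any $o\in X$. *)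

(* Defs.v *)
From Stdlib Require Import Reals List ZArith.
From Coquelicot Require Import Coquelicot.
Open Scope R_scope.

Section Defs.
Context {X G : Type} (d : X -> X -> R).

Definition is_metric : Prop :=
  (forall x y, 0 <= d x y) /\ (forall x y, d x y = 0 <-> x = y) /\
  (forall x y, d x y = d y x) /\ (forall x y z, d x z <= d x y + d y z).

Definition is_geodesic_space : Prop :=
  forall x y, exists gam : R -> X, gam 0 = x /\ gam (d x y) = y /\
    forall s t, 0 <= s <= d x y -> 0 <= t <= d x y -> d (gam s) (gam t) = Rabs (s - t).

Fixpoint chain_len (f : R -> X) (t0 : R) (l : list R) : R :=
  match l with nil => 0 | t1 :: l' => d (f t0) (f t1) + chain_len f t1 l' end.

Fixpoint incr_from (t0 : R) (l : list R) : Prop :=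
  match l with nil => True | t1 :: l' => t0 <= t1 /\ incr_from t1 l' end.

Definition path_length (f : R -> X) (s t L : R) : Prop :=
  is_lub (fun v => exists l, incr_from s l /\ last l s = t /\ v = chain_len f s l) L.

(* a (rectifiable, continuous) path [a,b] -> X parametrised by arc length *)
Definition is_path (f : R -> X) (a b : R) : Prop :=
  a <= b /\
  (forall t, a <= t <= b -> forall eps, 0 < eps -> exists eta, 0 < eta /\
      forall s, a <= s <= b -> Rabs (s - t) < eta -> d (f s) (f t) < eps) /\
  (forall s t, a <= s -> s <= t -> t <= b -> path_length f s t (t - s)).

Definition quasi_geodesic (f : R -> X) (a b kappa lambda : R) : Prop :=
  forall t t', a <= t <= b -> a <= t' <= b ->
    d (f t) (f t') <= Rabs (t - t') /\ Rabs (t - t') <= kappa * d (f t) (f t') + lambda.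

Definition joins (f : R -> X) (a b : R) (x y : X) : Prop :=
  (f a = x /\ f b = y) \/ (f a = y /\ f b = x).

Variables (mul : G -> G -> G) (e : G) (inv : G -> G) (act : G -> X -> X).

Definition is_group : Prop :=
  (forall g h k, mul g (mul h k) = mul (mul g h) k) /\
  (forall g, mul e g = g) /\ (forall g, mul g e = g) /\
  (forall g, mul (inv g) g = e) /\ (forall g, mul g (inv g) = e).

Definition isometric_action : Prop :=
  (forall x, act e x = x) /\ (forall g h x, act (mul g h) x = act g (act h x)) /\
  (forall g x y, d (act g x) (act g y) = d x y).

Definition proper_action : Prop :=
  forall x r, exists l : list G, forall g, d x (act g x) <= r -> In g l.

(* Gam a b f : the path f restricted to [a,b] belongs to the path system *)
Definition path_system (Gam : R -> R -> (R -> X) -> Prop) (mu nu : R) : Prop :=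
  (forall a b f, Gam a b f -> is_path f a b) /\
  (forall g a b f, Gam a b f -> Gam a b (fun t => act g (f t))) /\
  (forall a b f c c', Gam a b f -> a <= c -> c <= c' -> c' <= b -> Gam c c' f) /\
  (forall x y, exists a b f, Gam a b f /\ joins f a b x y) /\
  (forall a b f, Gam a b f -> quasi_geodesic f a b mu nu).

Definition path_system_group (Gam : R -> R -> (R -> X) -> Prop) (mu nu : R) : Prop :=
  is_metric /\ is_geodesic_space /\ is_group /\ isometric_action /\ proper_action /\
  path_system Gam mu nu.

Fixpoint gpow_nat (g : G) (n : nat) : G :=
  match n with O => e | S n' => mul g (gpow_nat g n') end.

Definition gpow (g : G) (z : Z) : G :=
  match z with
  | Z0 => e
  | Zpos p => gpow_nat g (Pos.to_nat p)
  | Zneg p => inv (gpow_nat g (Pos.to_nat p))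
  end.

(* closed balls B_X(p, delta) = {z | d z p <= delta} *)
Definition constricting_map (Gam : R -> R -> (R -> X) -> Prop)
    (A : X -> Prop) (pi : X -> X) (delta : R) : Prop :=
  (forall x, A (pi x)) /\
  (forall x, A x -> d x (pi x) <= delta) /\
  (forall x y a b f, Gam a b f -> joins f a b x y -> d (pi x) (pi y) > delta ->
     (exists t, a <= t <= b /\ d (f t) (pi x) <= delta) /\
     (exists t, a <= t <= b /\ d (f t) (pi y) <= delta)).

Definition constricting_element (Gam : R -> R -> (R -> X) -> Prop)
    (g : G) (A : X -> Prop) (pi : X -> X) (delta : R) : Prop :=
  (forall n : nat, (0 < n)%nat -> gpow_nat g n <> e) /\
  (forall (z : Z) x, A x -> A (act (gpow g z) x)) /\
  (exists o, A o /\ forall a, A a -> exists z : Z, d a (act (gpow g z) o) <= delta) /\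
  constricting_map Gam A pi delta.

(* [g]^infty = limsup_m d(o, g^m o) / m *)
Definition asymp_trans (g : G) (o : X) : R :=
  real (LimSup_seq (fun n => d o (act (gpow_nat g n) o) / INR n)).

End Defs.

(* Main.v *)
Require Import Defs.
From Stdlib Require Import Reals ZArith Lra Lia.
From Coquelicot Require Import Coquelicot.
Open Scope R_scope.

Lemma gpow_add {G : Type} (mul : G -> G -> G) (e : G) (g : G)
  (Hassoc : forall a b c, mul a (mul b c) = mul (mul a b) c)
  (Hl : forall a, mul e a = a) (a b : nat) :
  gpow_nat mul e g (a + b) = mul (gpow_nat mul e g a) (gpow_nat mul e g b).
Proof.
  induction a as [|a IH]; simpl.
  - now rewrite Hl.
  - now rewrite IH, Hassoc.
Qed.

Lemma dist_add {X G : Type} (d : X -> X -> R) (mul : G -> G -> G) (e : G) (inv : G -> G)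
  (act : G -> X -> X) (Hm : is_metric d) (Hg : is_group mul e inv)
  (Ha : isometric_action d mul e act) (g : G) (w : X) (a b : nat) :
  d w (act (gpow_nat mul e g (a + b)) w) <=
  d w (act (gpow_nat mul e g a) w) + d w (act (gpow_nat mul e g b) w).
Proof.
  destruct Hm as (_ & _ & _ & Htri). destruct Hg as (Has & Hl & _).
  destruct Ha as (_ & Hmul & Hiso).
  rewrite gpow_add by assumption. rewrite Hmul.
  eapply Rle_trans. apply (Htri _ (act (gpow_nat mul e g a) w)).
  rewrite Hiso. lra.
Qed.

Lemma dist_mult {X G : Type} (d : X -> X -> R) (mul : G -> G -> G) (e : G) (inv : G -> G)
  (act : G -> X -> X) (Hm : is_metric d) (Hg : is_group mul e inv)
  (Ha : isometric_action d mul e act) (g : G) (w : X) (q n : nat) :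
  d w (act (gpow_nat mul e g (q * n)) w) <= INR q * d w (act (gpow_nat mul e g n) w).
Proof.
  induction q as [|q IH].
  - simpl. destruct Ha as (H1 & _). rewrite H1. destruct Hm as (_ & Hz & _).
    assert (d w w = 0) by (apply Hz; reflexivity). lra.
  - change (S q * n)%nat with (n + q * n)%nat.
    eapply Rle_trans. apply (dist_add d mul e inv act Hm Hg Ha).
    rewrite S_INR. lra.
Qed.

Lemma dist_lin {X G : Type} (d : X -> X -> R) (mul : G -> G -> G) (e : G) (inv : G -> G)
  (act : G -> X -> X) (Hm : is_metric d) (Hg : is_group mul e inv)
  (Ha : isometric_action d mul e act) (g : G) (w : X) (r : nat) :
  d w (act (gpow_nat mul e g r) w) <= INR r * d w (act (gpow_nat mul e g 1) w).
Proof.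
  pose proof (dist_mult d mul e inv act Hm Hg Ha g w r 1) as H.
  now rewrite Nat.mul_1_r in H.
Qed.

Lemma tau_bound {X G : Type} (d : X -> X -> R) (mul : G -> G -> G) (e : G) (inv : G -> G)
  (act : G -> X -> X) (Hm : is_metric d) (Hg : is_group mul e inv)
  (Ha : isometric_action d mul e act) (g : G) (o w : X) (n : nat) :
  (0 < n)%nat ->
  asymp_trans d mul e act g o <= d w (act (gpow_nat mul e g n) w) / INR n.
Proof.
  intros Hn.
  set (c := d w (act (gpow_nat mul e g n) w) / INR n).
  assert (Hnpos : 0 < INR n) by (apply lt_0_INR; lia).
  assert (Hc : 0 <= c).
  { unfold c. apply Rdiv_le_0_compat; [apply Hm | lra]. }
  set (B := 2 * d o w + INR n * d w (act (gpow_nat mul e g 1) w)).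
  assert (HB : 0 <= B).
  { unfold B. pose proof (proj1 Hm o w). pose proof (proj1 Hm w (act (gpow_nat mul e g 1) w)).
    pose proof (Rmult_le_pos _ _ (Rlt_le _ _ Hnpos) H0). lra. }
  assert (Hev : forall eps, 0 < eps -> Rbar_le (LimSup_seq (fun N => d o (act (gpow_nat mul e g N) o) / INR N)) (c + eps)).
  { intros eps Heps.
    rewrite <- (LimSup_seq_const (c + eps)).
    apply LimSup_le.
    destruct (INR_archimed eps B) as [N0 HN0]; [lra|].
    exists (S N0). intros N HN.
    assert (HNpos : 0 < INR N) by (apply lt_0_INR; lia).
    assert (HN0N : INR N0 <= INR N) by (apply le_INR; lia).
    pose proof (Nat.div_mod N n ltac:(lia)) as Hdm.
    set (q := (N / n)%nat) in *. set (r := (N mod n)%nat) in *.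
    assert (Hr : (r < n)%nat) by (apply Nat.mod_upper_bound; lia).
    assert (H1 : d o (act (gpow_nat mul e g N) o) <= 2 * d o w + d w (act (gpow_nat mul e g N) w)).
    { destruct Hm as (_ & _ & Hsym & Htri). destruct Ha as (_ & _ & Hiso).
      pose proof (Htri o w (act (gpow_nat mul e g N) o)).
      pose proof (Htri w (act (gpow_nat mul e g N) w) (act (gpow_nat mul e g N) o)).
      rewrite Hiso in H0. rewrite (Hsym w o) in H0. lra. }
    assert (H2 : d w (act (gpow_nat mul e g N) w) <= INR q * d w (act (gpow_nat mul e g n) w)
                 + INR r * d w (act (gpow_nat mul e g 1) w)).
    { rewrite Hdm, Nat.mul_comm.
      eapply Rle_trans. apply (dist_add d mul e inv act Hm Hg Ha).
      pose proof (dist_mult d mul e inv act Hm Hg Ha g w q n).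
      pose proof (dist_lin d mul e inv act Hm Hg Ha g w r). lra. }
    assert (H3 : INR r * d w (act (gpow_nat mul e g 1) w) <= INR n * d w (act (gpow_nat mul e g 1) w)).
    { apply Rmult_le_compat_r. apply Hm. apply le_INR. lia. }
    assert (H4 : INR q * d w (act (gpow_nat mul e g n) w) <= INR N * c).
    { assert (E : d w (act (gpow_nat mul e g n) w) = INR n * c) by (unfold c; field; lra).
      rewrite E. rewrite <- Rmult_assoc. apply Rmult_le_compat_r; [lra|].
      rewrite <- mult_INR. apply le_INR. lia. }
    simpl. apply Rle_div_l; [lra|].
    assert (B <= INR N * eps).
    { assert (INR N0 * eps <= INR N * eps) by (apply Rmult_le_compat_r; lra). lra. }
    unfold B in *. nra. }
  unfold asymp_trans.
  destruct (LimSup_seq (fun N => d o (act (gpow_nat mul e g N) o) / INR N)) as [l| |] eqn:EL;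
    simpl; [|lra|lra].
  destruct (Rle_or_lt l c) as [Hle|Hlt]; [exact Hle|].
  exfalso. specialize (Hev ((l - c) / 2) ltac:(lra)). simpl in Hev. lra.
Qed.

Lemma mu_bound (mu x y : R) : 0 <= x -> x <= y -> mu * x <= Rabs mu * y.
Proof.
  intros. apply Rle_trans with (Rabs mu * x).
  - pose proof (Rle_abs mu). nra.
  - apply Rmult_le_compat_l; [apply Rabs_pos | lra].
Qed.

Lemma cs_between {X G : Type} (d : X -> X -> R) (act : G -> X -> X)
  (Gam : R -> R -> (R -> X) -> Prop) (mu nu : R) (A : X -> Prop) (pi : X -> X) (delta : R)
  (HP : path_system d act Gam mu nu) (CS : constricting_map d Gam A pi delta)
  (a b : R) (f : R -> X) (H : Gam a b f) (s s' : R) :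
  a <= s <= b -> a <= s' <= b ->
  d (pi (f s)) (pi (f s')) > delta ->
  (exists t, Rmin s s' <= t <= Rmax s s' /\ d (f t) (pi (f s)) <= delta) /\
  (exists t, Rmin s s' <= t <= Rmax s s' /\ d (f t) (pi (f s')) <= delta).
Proof.
  intros Hs Hs' Hd.
  destruct HP as (_ & _ & Hsub & _ & _).
  destruct CS as (_ & _ & CS2).
  assert (Hg : Gam (Rmin s s') (Rmax s s') f).
  { apply Hsub with a b; auto.
    - apply Rmin_glb; lra.
    - apply Rmin_Rmax.
    - apply Rmax_lub; lra. }
  apply (CS2 _ _ _ _ _ Hg); auto.
  unfold joins, Rmin, Rmax. destruct (Rle_dec s s'); auto.
Qed.

Lemma K0_lemma {X G : Type} (d : X -> X -> R) (act : G -> X -> X)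
  (Gam : R -> R -> (R -> X) -> Prop) (mu nu : R) (A : X -> Prop) (pi : X -> X) (delta : R)
  (Hm : is_metric d)
  (HP : path_system d act Gam mu nu) (CS : constricting_map d Gam A pi delta)
  (y a0 : X) : A a0 -> d y a0 <= delta ->
  d y (pi y) <= 3 * delta + Rabs mu * delta + Rabs nu.
Proof.
  intros HA Hya.
  destruct Hm as (Hpos & Hz & Hsym & Htri).
  assert (Hd0 : 0 <= delta) by (pose proof (Hpos y a0); lra).
  pose proof (Rabs_pos mu). pose proof (Rabs_pos nu). pose proof (Rle_abs nu).
  assert (0 <= Rabs mu * delta) by (apply Rmult_le_pos; lra).
  destruct CS as (CS0 & CS1 & CS2).
  destruct (Rle_or_lt (d (pi y) (pi a0)) delta) as [Hle | Hgt].
  - pose proof (CS1 a0 HA).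
    pose proof (Htri y a0 (pi a0)) as T1. pose proof (Htri y (pi a0) (pi y)) as T2.
    rewrite (Hsym (pi a0) (pi y)) in T2. lra.
  - destruct HP as (Hpath & _ & _ & Hex & Hqg).
    destruct (Hex y a0) as (a & b & f & Hf & Hj).
    destruct (Hpath _ _ _ Hf) as (Hab & _).
    pose proof (Hqg _ _ _ Hf) as Q.
    destruct (CS2 _ _ _ _ _ Hf Hj Hgt) as ((t & Ht & Hft) & _).
    assert (Hba : b - a <= Rabs mu * delta + Rabs nu).
    { destruct (Q a b) as (_ & Q2); try lra.
      rewrite Rabs_left1 in Q2 by lra.
      assert (mu * d (f a) (f b) <= Rabs mu * delta).
      { apply mu_bound. apply Hpos.
        destruct Hj as [(E1 & E2) | (E1 & E2)]; rewrite E1, E2; [|rewrite Hsym]; lra. }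
      lra. }
    assert (Hyt : d y (f t) <= b - a).
    { destruct Hj as [(E1 & E2) | (E1 & E2)].
      - rewrite <- E1. destruct (Q a t) as (Q1 & _); try lra.
        rewrite Rabs_left1 in Q1 by lra. lra.
      - rewrite <- E2. destruct (Q b t) as (Q1 & _); try lra.
        rewrite Rabs_right in Q1 by lra. lra. }
    pose proof (Htri y (f t) (pi y)). lra.
Qed.
Lemma uniq_lemma {X G : Type} (d : X -> X -> R) (act : G -> X -> X)
  (Gam : R -> R -> (R -> X) -> Prop) (mu nu : R) (A : X -> Prop) (pi pi' : X -> X) (delta : R)
  (Hm : is_metric d)
  (HP : path_system d act Gam mu nu) (CS : constricting_map d Gam A pi delta)
  (CS' : constricting_map d Gam A pi' delta) (x : X) :
  d (pi x) (pi' x) <= 7 * delta + 2 * Rabs mu * delta + 2 * Rabs nu.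
Proof.
  pose proof Hm as Hm0.
  destruct Hm as (Hpos & Hz & Hsym & Htri).
  pose proof (Rabs_pos mu). pose proof (Rabs_pos nu). pose proof (Rle_abs nu).
  set (p := pi x). set (q := pi' x). set (D := d p q).
  destruct (Rle_or_lt D (7 * delta + 2 * Rabs mu * delta + 2 * Rabs nu)) as [Hle|Hgt]; [exact Hle|].
  exfalso.
  pose proof CS as (CSA & CS1 & _). pose proof CS' as (CSA' & CS1' & _).
  assert (Hd0 : 0 <= delta).
  { pose proof (CS1 p (CSA x)). pose proof (Hpos p (pi p)). lra. }
  assert (0 <= Rabs mu * delta) by (apply Rmult_le_pos; lra).
  pose proof HP as (Hpath & _ & _ & Hex & Hqg).
  destruct (Hex x p) as (a & b & f & Hf & Hj).
  destruct (Hpath _ _ _ Hf) as (Hab & _).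
  pose proof (Hqg _ _ _ Hf) as Q.
  assert (Hor : exists u v, f u = x /\ f v = p /\ a <= u <= b /\ a <= v <= b /\
            ((u = a /\ v = b) \/ (u = b /\ v = a))).
  { destruct Hj as [(E1 & E2) | (E1 & E2)].
    - exists a, b. repeat split; auto; lra.
    - exists b, a. repeat split; auto; lra. }
  destruct Hor as (u & v & Eu & Ev & Hu & Hv & Huv).
  assert (Hpp : d (pi' p) p <= delta) by (rewrite Hsym; apply CS1'; apply CSA).
  assert (S1 : d (pi' (f u)) (pi' (f v)) > delta).
  { rewrite Eu, Ev. fold q. pose proof (Htri q (pi' p) p). rewrite (Hsym q p) in H3. unfold D in Hgt. lra. }
  destruct (cs_between d act Gam mu nu A pi' delta HP CS' a b f Hf u v Hu Hv S1)
    as ((t1 & Ht1 & Hft1) & _).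
  rewrite Eu in Hft1. fold q in Hft1.
  assert (Ht1ab : a <= t1 <= b).
  { destruct Huv as [(-> & ->) | (-> & ->)]; unfold Rmin, Rmax in Ht1;
      destruct (Rle_dec _ _); lra. }
  assert (HK : d (f t1) (pi (f t1)) <= 3 * delta + Rabs mu * delta + Rabs nu)
    by (apply (K0_lemma d act Gam mu nu A pi delta Hm0 HP CS (f t1) q (CSA' x) Hft1)).
  assert (S2 : d (pi (f u)) (pi (f t1)) > delta).
  { rewrite Eu. fold p.
    pose proof (Htri p (pi (f t1)) q) as T1. pose proof (Htri (pi (f t1)) (f t1) q) as T2.
    rewrite (Hsym (pi (f t1)) (f t1)) in T2. unfold D in Hgt. lra. }
  destruct (cs_between d act Gam mu nu A pi delta HP CS a b f Hf u t1 Hu Ht1ab S2)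
    as ((t2 & Ht2 & Hft2) & _).
  rewrite Eu in Hft2. fold p in Hft2.
  assert (Ht2ab : a <= t2 <= b).
  { unfold Rmin, Rmax in Ht2; destruct (Rle_dec _ _); lra. }
  assert (Hbet : Rabs (t1 - t2) <= Rabs (v - t2)).
  { unfold Rmin, Rmax in Ht1, Ht2.
    destruct Huv as [(-> & ->) | (-> & ->)];
    destruct (Rle_dec a b); destruct (Rle_dec b a); try destruct (Rle_dec a t1);
    try destruct (Rle_dec b t1);
    unfold Rabs; repeat destruct Rcase_abs; lra. }
  destruct (Q v t2 Hv Ht2ab) as (_ & Qv).
  destruct (Q t1 t2 Ht1ab Ht2ab) as (Qt & _).
  rewrite Ev in Qv.
  assert (mu * d p (f t2) <= Rabs mu * delta).
  { apply mu_bound. apply Hpos. rewrite Hsym. lra. }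
  assert (T : d p q <= d p (f t2) + d (f t2) (f t1) + d (f t1) q).
  { pose proof (Htri p (f t2) q). pose proof (Htri (f t2) (f t1) q). lra. }
  rewrite (Hsym (f t2) (f t1)) in T. rewrite (Hsym p (f t2)) in T.
  unfold D in Hgt. lra.
Qed.

Lemma conj_cs {X G : Type} (d : X -> X -> R) (act : G -> X -> X)
  (Gam : R -> R -> (R -> X) -> Prop) (mu nu : R) (A : X -> Prop) (pi : X -> X) (delta : R)
  (HP : path_system d act Gam mu nu) (CS : constricting_map d Gam A pi delta)
  (h k : G) (Hhk : forall z, act h (act k z) = z) (Hkh : forall z, act k (act h z) = z)
  (Hiso : forall g x y, d (act g x) (act g y) = d x y)
  (Ah : forall z, A z -> A (act h z)) (Ak : forall z, A z -> A (act k z)) :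
  constricting_map d Gam A (fun y => act h (pi (act k y))) delta.
Proof.
  destruct CS as (CSA & CS1 & CS2).
  split; [|split].
  - intros x. apply Ah, CSA.
  - intros x Hx. rewrite <- (Hhk x) at 1. rewrite Hiso. apply CS1. now apply Ak.
  - intros x y a b f Hf Hj Hd.
    destruct HP as (_ & Hinv & _).
    assert (Hf' : Gam a b (fun t => act k (f t))) by (apply Hinv; exact Hf).
    assert (Hj' : joins (fun t => act k (f t)) a b (act k x) (act k y)).
    { destruct Hj as [(E1 & E2) | (E1 & E2)]; [left|right]; rewrite E1, E2; auto. }
    rewrite Hiso in Hd.
    destruct (CS2 _ _ _ _ _ Hf' Hj' Hd) as ((t & Ht & H1) & (t' & Ht' & H2)).
    split; [exists t | exists t']; split; auto;
      rewrite <- (Hhk (f _)), Hiso; assumption.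
Qed.

Theorem mainTheorem17 (X G : Type) (d : X -> X -> R)
  (mul : G -> G -> G) (e : G) (inv : G -> G) (act : G -> X -> X)
  (Gam : R -> R -> (R -> X) -> Prop) (mu nu : R)
  (g : G) (A : X -> Prop) (pi : X -> X) (delta : R) :
  path_system_group d mul e inv act Gam mu nu ->
  constricting_element d mul e inv act Gam g A pi delta ->
  exists theta : R, 0 <= theta /\
    forall (o x x' : X) (m : Z),
      d (pi x) (pi (act (gpow mul e inv g m) x')) >=
        IZR (Z.abs m) * asymp_trans d mul e act g o - d (pi x) (pi x') - theta.
Proof.
  intros (Hm & _ & Hg & Ha & _ & HP) (_ & HAinv & Hcob & CS).
  pose proof Hm as Hm0. pose proof Hg as Hg0. pose proof Ha as Ha0.
  destruct Hm as (Hpos & Hz & Hsym & Htri).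
  destruct Hg as (Has & Hl & Hr & Hli & Hri).
  destruct Ha as (He & Hmul & Hiso).
  destruct Hcob as (o0 & Ho0 & _).
  pose proof CS as (CSA & CS1 & _).
  assert (Hd0 : 0 <= delta) by (pose proof (CS1 o0 Ho0); pose proof (Hpos o0 (pi o0)); lra).
  set (theta := 7 * delta + 2 * Rabs mu * delta + 2 * Rabs nu).
  assert (Hth : 0 <= theta).
  { unfold theta. pose proof (Rabs_pos mu). pose proof (Rabs_pos nu).
    assert (0 <= Rabs mu * delta) by (apply Rmult_le_pos; lra). lra. }
  exists theta. split; [exact Hth|].
  assert (Key : forall h k, (forall z, act h (act k z) = z) -> (forall z, act k (act h z) = z) ->
            (forall z, A z -> A (act h z)) -> (forall z, A z -> A (act k z)) ->
            forall y, d (pi (act h y)) (act h (pi y)) <= theta).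
  { intros h k Hhk Hkh Ah Ak y.
    pose proof (conj_cs d act Gam mu nu A pi delta HP CS h k Hhk Hkh Hiso Ah Ak) as CS'.
    pose proof (uniq_lemma d act Gam mu nu A pi _ delta Hm0 HP CS CS' (act h y)) as U.
    simpl in U. rewrite Hkh in U. exact U. }
  assert (Fin : forall x x' h, d (pi x') (pi (act h x')) >= d (pi x') (act h (pi x')) - theta ->
             d (pi x) (pi (act h x')) >= d (pi x') (act h (pi x')) - d (pi x) (pi x') - theta).
  { intros x x' h H.
    pose proof (Htri (pi x') (pi x) (pi (act h x'))). rewrite (Hsym (pi x') (pi x)) in H0. lra. }
  intros o x x' m.
  destruct m as [|p|p].
  - simpl. rewrite He. pose proof (Hpos (pi x) (pi x')). lra.
  - set (n := Pos.to_nat p).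
    set (h := gpow_nat mul e g n).
    assert (Hhk : forall z, act h (act (inv h) z) = z) by (intros; rewrite <- Hmul, Hri, He; auto).
    assert (Hkh : forall z, act (inv h) (act h z) = z) by (intros; rewrite <- Hmul, Hli, He; auto).
    assert (Ah : forall z, A z -> A (act h z)) by (intros z Hz'; apply (HAinv (Zpos p) z Hz')).
    assert (Ak : forall z, A z -> A (act (inv h) z)) by (intros z Hz'; apply (HAinv (Zneg p) z Hz')).
    pose proof (Key h (inv h) Hhk Hkh Ah Ak x') as K.
    pose proof (tau_bound d mul e inv act Hm0 Hg0 Ha0 g o (pi x') n (Pos2Nat.is_pos p)) as T.
    assert (Hn : 0 < INR n) by (apply lt_0_INR; apply Pos2Nat.is_pos).
    assert (IZR (Z.abs (Zpos p)) = INR n) by (simpl; unfold n; rewrite INR_IZR_INZ, positive_nat_Z; reflexivity).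
    rewrite H. change (gpow mul e inv g (Zpos p)) with h.
    assert (F : d (pi x) (pi (act h x')) >= d (pi x') (act h (pi x')) - d (pi x) (pi x') - theta).
    { apply Fin. pose proof (Htri (pi x') (pi (act h x')) (act h (pi x'))).
      lra. }
    fold h in T.
    assert (T2 : INR n * asymp_trans d mul e act g o <= d (pi x') (act h (pi x'))).
    { apply Rmult_le_compat_l with (r := INR n) in T; [|lra].
      replace (INR n * (d (pi x') (act h (pi x')) / INR n)) with (d (pi x') (act h (pi x'))) in T by (field; lra).
      exact T. }
    lra.
  - set (n := Pos.to_nat p).
    set (k := gpow_nat mul e g n).
    set (h := inv k).
    assert (Hhk : forall z, act h (act k z) = z) by (intros; unfold h; rewrite <- Hmul, Hli, He; auto).
    assert (Hkh : forall z, act k (act h z) = z) by (intros; unfold h; rewrite <- Hmul, Hri, He; auto).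
    assert (Ah : forall z, A z -> A (act h z)) by (intros z Hz'; apply (HAinv (Zneg p) z Hz')).
    assert (Ak : forall z, A z -> A (act k z)) by (intros z Hz'; apply (HAinv (Zpos p) z Hz')).
    pose proof (Key h k Hhk Hkh Ah Ak x') as K.
    pose proof (tau_bound d mul e inv act Hm0 Hg0 Ha0 g o (pi x') n (Pos2Nat.is_pos p)) as T.
    assert (Hn : 0 < INR n) by (apply lt_0_INR; apply Pos2Nat.is_pos).
    assert (IZR (Z.abs (Zneg p)) = INR n) by (simpl; unfold n; rewrite INR_IZR_INZ, positive_nat_Z; reflexivity).
    rewrite H. change (gpow mul e inv g (Zneg p)) with h.
    assert (E : d (pi x') (act h (pi x')) = d (pi x') (act k (pi x'))).
    { rewrite <- (Hiso k (pi x') (act h (pi x'))), Hkh. apply Hsym. }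
    assert (F : d (pi x) (pi (act h x')) >= d (pi x') (act h (pi x')) - d (pi x) (pi x') - theta).
    { apply Fin. pose proof (Htri (pi x') (pi (act h x')) (act h (pi x'))).
      lra. }
    rewrite E in F.
    fold k in T.
    assert (T2 : INR n * asymp_trans d mul e act g o <= d (pi x') (act k (pi x'))).
    { apply Rmult_le_compat_l with (r := INR n) in T; [|lra].
      replace (INR n * (d (pi x') (act k (pi x')) / INR n)) with (d (pi x') (act k (pi x'))) in T by (field; lra).
      exact T. }
    lra.
Qed.
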